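(* Let $k$ be a field and let $Y,Z$ be objects of $\mathcal S_2(k)$ of the same partition type. (1) $Y\leq_{\rm hom}Z$ holds if and only if $[X,Y]\le[X,Z]$ for every object $X$ of $\mathcal S_2(k)$. (2) $Y\leq_{\rm hom}Z$ holds if and only if $[X,Y]\le[X,Z]$ for every finite-dimensional $\Lambda$-module $X$.
   Context: $\Lambda=\begin{pmatrix}k[T]&k[T]\\0&k[T]\end{pmatrix}$; finite-dimensional right $\Lambda$-modules are identified with triples $(X_1,X_2,h)$ of finite-dimensional $k[T]$-modules and a $k[T]$-map $h:X_1\to X_2$; morphisms $(X_1,X_2,h)\to(X'_1,X'_2,h')$ are pairs $(\psi_1,\psi_2)$ of $k[T]$-maps with $h'\psi_1=\psi_2h$. For a partition $\alpha$ let $N_\alpha=\bigoplus_ik[T]/(T^{\alpha_i})$. $\mathcal S(k)$ is the full subcategory of triples $(N_\alpha,N_\beta,f)$ with $f$ injective; $\mathcal S_2(k)$ the full subcategory of those with $\alpha_1\le2$. The partition type of $(N_\alpha,N_\beta,f)$ is $(\alpha,\beta,\gamma)$ where $\operatorname{Coker}f\cong N_\gamma$. $[X,Y]=\dim_k\operatorname{Hom}_\Lambda(X,Y)$. $Y\leq_{\rm hom}Z$ means $[X,Y]\le[X,Z]$ for every object $X$ of $\mathcal S(k)$. *)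

(* Defs.v *)
From HB Require Import structures.
From mathcomp Require Import all_boot all_order all_algebra.
Set Implicit Arguments. Unset Strict Implicit. Unset Printing Implicit Defensive.
Import GRing.Theory.
Local Open Scope ring_scope.

(* Conventions: a finite-dimensional k[T]-module is k^n (row vectors) with T
   acting by right multiplication by a matrix A : 'M_n.  A k[T]-map
   X -> X' is v |-> v *m P with A *m P = P *m A'. *)

Section Defs.
Variable k : fieldType.

Record triple := Triple {
  tr_d1 : nat; tr_d2 : nat;
  tr_A1 : 'M[k]_tr_d1;
  tr_A2 : 'M[k]_tr_d2;
  tr_h  : 'M[k]_(tr_d1, tr_d2)
}.

(* (X1,X2,h) is a (finite-dimensional right) Lambda-module: h is k[T]-linear *)
Definition is_Lmod (X : triple) : Prop := tr_A1 X *m tr_h X = tr_h X *m tr_A2 X.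

Definition hom_cond (X Y : triple)
  (p : 'M[k]_(tr_d1 X, tr_d1 Y) * 'M[k]_(tr_d2 X, tr_d2 Y)) :
  ('M[k]_(tr_d1 X, tr_d1 Y) * 'M[k]_(tr_d2 X, tr_d2 Y)) * 'M[k]_(tr_d1 X, tr_d2 Y) :=
  ((tr_A1 X *m p.1 - p.1 *m tr_A1 Y, tr_A2 X *m p.2 - p.2 *m tr_A2 Y),
   tr_h X *m p.2 - p.1 *m tr_h Y).

Definition Hom_space (X Y : triple) := lker (linfun (@hom_cond X Y)).

(* [X, Y] = dim_k Hom_Lambda(X, Y) *)
Definition homdim (X Y : triple) : nat := \dim (Hom_space X Y).

Definition is_partition (s : seq nat) : bool :=
  sorted geq s && all (fun x => 0 < x)%N s.

(* Nilpotent Jordan block: matrix of T on k[T]/(T^a) in basis 1,T,..,T^(a-1) *)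
Definition Jblock (a : nat) : 'M[k]_a := \matrix_(i, j) ((j == i.+1 :> nat)%:R).

(* N_alpha = (+)_i k[T]/(T^alpha_i) *)
Fixpoint Nmat (s : seq nat) : 'M[k]_(sumn s) :=
  match s return 'M[k]_(sumn s) with
  | [::] => 0
  | a :: s' => block_mx (Jblock a) 0 0 (Nmat s')
  end.

(* X is an object of S(k): X = (N_alpha, N_beta, f) with f injective *)
Definition in_S (X : triple) : Prop :=
  exists (a b : seq nat) (f : 'M[k]_(sumn a, sumn b)),
    [/\ is_partition a, is_partition b,
        X = Triple (Nmat a) (Nmat b) f,
        is_Lmod X & row_free f].

Definition in_S2 (X : triple) : Prop :=
  exists (a b : seq nat) (f : 'M[k]_(sumn a, sumn b)),
    [/\ is_partition a && is_partition b, (head 0 a <= 2)%N,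
        X = Triple (Nmat a) (Nmat b) f,
        is_Lmod X & row_free f].

(* X = (N_a, N_b, f) in S(k) has partition type (a, b, c): Coker f ~ N_c,
   i.e. there is a surjective k[T]-map g : N_b -> N_c whose kernel is Im f. *)
Definition has_ptype (X : triple) (a b c : seq nat) : Prop :=
  [/\ is_partition a, is_partition b, is_partition c &
   exists f : 'M[k]_(sumn a, sumn b),
     [/\ X = Triple (Nmat a) (Nmat b) f,
         is_Lmod X, row_free f &
         exists g : 'M[k]_(sumn b, sumn c),
           [/\ Nmat b *m g = g *m Nmat c, row_full g & (f == kermx g)%MS]]].

Definition hom_le (Y Z : triple) : Prop :=
  forall X, in_S X -> (homdim X Y <= homdim X Z)%N.

End Defs.

(* Main.v *)
Require Import Defs.
From mathcomp Require Import all_boot all_order all_algebra.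
From HB Require Import structures.
From mathcomp Require Import zify.
Set Implicit Arguments. Unset Strict Implicit. Unset Printing Implicit Defensive.
Import GRing.Theory.
Local Open Scope ring_scope.

Section S.
Variable k : fieldType.

Lemma linfunE (aT rT : vectType k) (f : aT -> rT) (lf : linear f) x :
  linfun f x = f x.
Proof.
pose F : {linear aT -> rT} := HB.pack f (GRing.isLinear.Build k aT rT *:%R f lf).
exact: (lfunE F x).
Qed.

Lemma hom_cond_lin (X Y : triple k) : linear (@hom_cond k X Y).
Proof.
move=> a p q; rewrite /hom_cond /=.
rewrite !mulmxDr !mulmxDl -!scalemxAr -!scalemxAl.
by congr (_, _, _); rewrite /= scalerBr opprD addrACA.
Qed.

Lemma HomP (X Y : triple k) p :
  reflect [/\ tr_A1 X *m p.1 = p.1 *m tr_A1 Y, tr_A2 X *m p.2 = p.2 *m tr_A2 Y &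
     tr_h X *m p.2 = p.1 *m tr_h Y] (p \in Hom_space X Y).
Proof.
rewrite /Hom_space memv_ker linfunE; last exact: hom_cond_lin.
rewrite /hom_cond; apply: (iffP eqP).
  by case=> /eqP; rewrite subr_eq0 => /eqP-> /eqP; rewrite subr_eq0 => /eqP-> /eqP; rewrite subr_eq0 => /eqP->.
by case=> -> -> ->; rewrite !subrr.
Qed.

Lemma pow_intertw m n (P : 'M[k]_(m,n)) (A : 'M_n) (B : 'M_m) :
  P *m A = B *m P -> forall e, P *m A ^+ e = B ^+ e *m P.
Proof.
move=> H; elim=> [|e IH]; first by rewrite !expr0 mulmx1 mul1mx.
by rewrite !exprSr -!mulmxE mulmxA IH -mulmxA H mulmxA.
Qed.

Lemma dim_le_inj (aT rT : vectType k) (U : {vspace aT}) (V : {vspace rT}) (f : aT -> rT) :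
  linear f -> (forall u, u \in U -> f u \in V) ->
  (forall u, u \in U -> f u = 0 -> u = 0) -> (\dim U <= \dim V)%N.
Proof.
move=> lf fUV finj; set F := linfun f.
have FE x : F x = f x by exact: linfunE.
have H0 : (U :&: lker F = 0)%VS.
  apply/eqP; rewrite -subv0; apply/subvP => v.
  rewrite memv_cap memv_ker FE memv0 => /andP[vU /eqP fv0].
  by rewrite (finj v vU fv0).
rewrite -(limg_dim_eq H0); apply: dimvS; apply/subvP => w /memv_imgP [u uU ->].
by rewrite FE; exact: fUV.
Qed.

Lemma lin_pairmul m1 m2 n1 n2 p1 p2 (L1 : 'M[k]_(p1, m1)) (L2 : 'M[k]_(p2, n1)) :
  linear (fun p : 'M[k]_(m1, m2) * 'M[k]_(n1, n2) => (L1 *m p.1, L2 *m p.2)).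
Proof. by move=> a p q; rewrite /= !mulmxDr -!scalemxAr. Qed.

Lemma hom_of2 (X Y : triple k) p :
  is_Lmod X -> is_Lmod Y -> row_free (tr_h Y) ->
  tr_A2 X *m p.2 = p.2 *m tr_A2 Y -> tr_h X *m p.2 = p.1 *m tr_h Y ->
  p \in Hom_space X Y.
Proof.
rewrite /is_Lmod => LX LY fY H2 H3; apply/HomP; split => //.
apply: (row_free_inj fY) => /=.
by rewrite -mulmxA -H3 mulmxA LX -mulmxA H2 mulmxA H3 -!mulmxA LY.
Qed.

Lemma Jblock_pow a e : (Jblock k a) ^+ e = \matrix_(i, j) (((j : nat) == (i + e)%N)%:R).
Proof.
elim: e => [|e IH].
  by apply/matrixP => i j; rewrite expr0 !mxE addn0 eq_sym.
apply/matrixP => i j; rewrite exprSr -mulmxE IH !mxE.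
have [lt|ge] := ltnP (i + e) a.
  rewrite (bigD1 (Ordinal lt)) //= !mxE eqxx mul1r big1 ?addr0 ?addnS //.
  move=> l nl; rewrite !mxE; rewrite -val_eqE /= in nl; by rewrite (negbTE nl) mul0r.
rewrite big1; last first.
  move=> l _; rewrite !mxE; case: eqP => [eql|]; last by rewrite mul0r.
  by have := ltn_ord l; rewrite eql ltnNge ge.
case: eqP => // eqj; have := ltn_ord j; by rewrite eqj addnS => /ltnW; rewrite ltnNge ge.
Qed.

Lemma Jblock_pow0 a e : (a <= e)%N -> (Jblock k a) ^+ e = 0.
Proof.
move=> ae; rewrite Jblock_pow; apply/matrixP => i j; rewrite !mxE.
case: eqP => // eqj; have := ltn_ord j; rewrite eqj.
by move=> /(leq_ltn_trans (leq_addl i e)); rewrite ltnNge ae.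
Qed.

Lemma block_diag_pow m n (A : 'M[k]_m) (B : 'M[k]_n) e :
  (block_mx A 0 0 B : 'M_(m + n)) ^+ e = block_mx (A ^+ e) 0 0 (B ^+ e).
Proof.
elim: e => [|e IH]; first by rewrite !expr0 -scalar_mx_block.
rewrite !exprSr -!mulmxE IH mulmx_block.
by rewrite !mulmx0 !mul0mx !addr0 !add0r.
Qed.

Lemma Nmat_pow0 (s : seq nat) e : all (fun x => x <= e)%N s -> (Nmat k s) ^+ e = 0.
Proof.
elim: s => [|a s IH] /=; first by move=> _; rewrite flatmx0.
case/andP=> ae /IH H; rewrite block_diag_pow H Jblock_pow0 //.
by rewrite block_mx0.
Qed.

Lemma part_all_head s : is_partition s -> all (fun x => x <= head 0 s)%N s.
Proof.
case: s => [|a s] //= /andP[srt _]; rewrite leqnn /=.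
have tr : transitive geq by move=> x y z /= h1 h2; exact: leq_trans h2 h1.
by have := order_path_min tr srt.
Qed.

Lemma all_leq_sumn s : all (fun x => x <= sumn s)%N s.
Proof.
elim: s => [|a s IH] //=; rewrite leq_addr /=.
by apply/allP => x /(allP IH) H; exact: leq_trans H (leq_addl _ _).
Qed.

End S.


Section J.
Variable k : fieldType.

Lemma pow_ge0 n (A : 'M[k]_n) m0 e : A ^+ m0 = 0 -> (m0 <= e)%N -> A ^+ e = 0.
Proof. by move=> H le; rewrite -(subnKC le) exprD H mul0r. Qed.

Lemma nz_row m n (B : 'M[k]_(m, n)) : B != 0 -> exists i, row i B != 0.
Proof.
move=> nB; case: (pickP (fun i => row i B != 0)) => [i Hi|H]; first by exists i.
by case/eqP: nB; apply/row_matrixP => i; rewrite row0; apply/eqP; move: (H i) => /= /negbFE.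
Qed.

Lemma nz_entry n (v : 'rV[k]_n) : v != 0 -> exists j, v 0 j != 0.
Proof.
move=> nv; case: (pickP (fun j => v 0 j != 0)) => [j Hj|H]; first by exists j.
case/eqP: nv; apply/matrixP => i j; rewrite ord1 mxE; apply/eqP.
by move: (H j) => /= /negbFE.
Qed.

Lemma mxpowS n (A : 'M[k]_n) i : A ^+ i *m A = A ^+ i.+1.
Proof. by rewrite exprSr. Qed.
Lemma mxpowD n (A : 'M[k]_n) i j : A ^+ i *m A ^+ j = A ^+ (i + j).
Proof. by rewrite exprD. Qed.

Section Tri.
Variables (n m1 : nat) (A : 'M[k]_n) (u : 'rV[k]_n) (w : 'cV[k]_n).
Hypothesis Am0 : A ^+ m1.+1 = 0.
Hypothesis vw : u *m A ^+ m1 *m w = 1%:M.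
Definition Kmx := \matrix_(i < m1.+1) (u *m A ^+ i).
Definition Phimx : 'M[k]_(n, m1.+1) := \matrix_(l, j) (A ^+ j *m w) l 0.

Lemma Phi_entry p (x : 'M[k]_(p, n)) a j : (x *m Phimx) a j = (x *m (A ^+ j *m w)) a 0.
Proof. by rewrite !mxE; apply: eq_bigr => l _; rewrite mxE. Qed.

Lemma PhiP p (x : 'M[k]_(p, n)) :
  x *m Phimx = 0 <-> forall j : 'I_m1.+1, x *m (A ^+ j *m w) = 0.
Proof.
split.
  move=> H j; apply/matrixP => a b; rewrite ord1 -Phi_entry H !mxE //.
move=> H; apply/matrixP => a j; rewrite Phi_entry H !mxE //.
Qed.

Lemma KA : Kmx *m A = Jblock k m1.+1 *m Kmx.
Proof.
apply/row_matrixP => i; rewrite !row_mul rowK (mulmx_sum_row (row i _)) -mulmxA mxpowS.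
have [lt|ge] := ltnP i.+1 m1.+1.
  rewrite (bigD1 (Ordinal lt)) //= big1 ?addr0.
    by rewrite /Jblock !mxE eqxx scale1r rowK.
  move=> l nl; rewrite /Jblock !mxE; rewrite -val_eqE /= in nl.
  by rewrite (negbTE nl) scale0r.
rewrite big1; last first.
  move=> l _; rewrite /Jblock !mxE; case: eqP => [eql|]; last by rewrite scale0r.
  by have := ltn_ord l; rewrite eql ltnNge ge.
by rewrite (pow_ge0 Am0 ge) mulmx0.
Qed.

Lemma key (y : 'rV[k]_m1.+1) : y != 0 ->
  exists2 t, (t <= m1)%N & exists2 c, c != 0 & y *m Kmx *m A ^+ t = c *: (u *m A ^+ m1).
Proof.
move=> ny; have [j0 Hj0] := nz_entry ny.
have ex : exists t, (t < m1.+1)%N && (y 0 (inord t) != 0).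
  by exists j0; rewrite ltn_ord inord_val.
case: (ex_minnP ex) => i0 /andP[i0lt yi0] mini.
exists (m1 - i0)%N; first exact: leq_subr.
exists (y 0 (inord i0)) => //.
rewrite (mulmx_sum_row y) mulmx_suml (bigD1 (inord i0)) //= big1 ?addr0.
  by rewrite rowK -!scalemxAl -mulmxA mxpowD inordK // subnKC.
move=> i ni; rewrite rowK -!scalemxAl.
have [lt|ge] := ltnP i i0.
  have : y 0 (inord i) == 0.
    apply: contraTT lt => H; rewrite -leqNgt; apply: mini.
    by rewrite ltn_ord H.
  by rewrite inord_val => /eqP ->; rewrite scale0r.
have gt : (i0 < i)%N.
  rewrite ltn_neqAle ge andbT; apply: contra ni => /eqP e.
  by apply/eqP; apply: val_inj; rewrite /= inordK // e.
rewrite -mulmxA mxpowD (pow_ge0 Am0) ?mulmx0 ?scaler0 //.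
by move: gt i0lt; clear; lia.
Qed.

Lemma sc0 c : c *: (u *m A ^+ m1) *m w = 0 -> c = 0.
Proof. by rewrite -scalemxAl vw scalemx1 => /matrixP/(_ 0 0); rewrite !mxE eqxx mulr1n. Qed.

Lemma K_free : row_free Kmx.
Proof.
rewrite -kermx_eq0; apply/eqP/row_matrixP => r; rewrite row0; apply/eqP.
apply/negPn/negP => nz; have [t _ [c nc H]] := key nz.
have H0 : row r (kermx Kmx) *m Kmx = 0 by rewrite -row_mul mulmx_ker row0.
rewrite H0 mul0mx in H; case/negP: nc; apply/eqP; apply: sc0.
by rewrite -H mul0mx.
Qed.

Lemma cap0 : (Kmx :&: kermx Phimx)%MS = 0.
Proof.
apply/row_matrixP => r; rewrite row0.
set x := row r _.
have xK : (x <= Kmx)%MS by apply: submx_trans (row_sub _ _) (capmxSl _ _).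
have xP : x *m Phimx = 0 by apply/sub_kermxP; apply: submx_trans (row_sub _ _) (capmxSr _ _).
set y := x *m pinvmx Kmx.
have xy : y *m Kmx = x by rewrite mulmxKpV.
case: (eqVneq y 0) => [y0|nz]; first by rewrite -xy y0 mul0mx.
have [t tle [c nc H]] := key nz.
case/negP: nc; apply/eqP; apply: sc0; rewrite -H xy.
have := (proj1 (PhiP x) xP (Ordinal (tle : (t < m1.+1)%N))); rewrite /= mulmxA => ->.
by [].
Qed.

Lemma kerA : (kermx Phimx *m A <= kermx Phimx)%MS.
Proof.
rewrite sub_kermx; apply/eqP; apply/PhiP => j.
have eA : A *m (A ^+ j *m w) = A ^+ j.+1 *m w by rewrite mulmxA -[A *m A ^+ j]/(A * A ^+ j) -exprS.
rewrite -mulmxA eA.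
have [lt|ge] := ltnP j.+1 m1.+1.
  exact: (proj1 (PhiP _) (mulmx_ker Phimx) (Ordinal lt)).
by rewrite (pow_ge0 Am0 ge) mul0mx mulmx0.
Qed.

End Tri.
Lemma nil_jordan n (A : 'M[k]_n) m : A ^+ m = 0 ->
  exists s : seq nat, [/\ is_partition s, (head 0 s <= m)%N &
    exists P : 'M[k]_(sumn s, n), [/\ row_free P, row_full P & P *m A = Nmat k s *m P]].
Proof.
elim/ltn_ind: n A m => n IH A m Am.
case: n IH A Am => [|n] IH A Am.
  exists [::]; split => //; exists 0; split.
  - by rewrite /row_free mxrank0.
  - by rewrite /row_full mxrank0.
  - by rewrite !flatmx0.
have ex : exists i, A ^+ i == 0 by exists m; apply/eqP.
case: (ex_minnP ex) => m0 /eqP Am0 mini.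
have m0m : (m0 <= m)%N by apply: mini; apply/eqP.
case: m0 Am0 mini m0m => [|m1] Am0 mini m0m.
  by move: Am0; rewrite expr0 => /eqP; rewrite oner_eq0.
have Am1 : A ^+ m1 != 0.
  by apply/negP => /mini; rewrite ltnn.
have [i Hi] := nz_row Am1.
set u := delta_mx 0 i : 'rV[k]_n.+1.
have uv : u *m A ^+ m1 = row i (A ^+ m1) by rewrite rowE.
have [j Hj] := nz_entry Hi.
set w := ((row i (A ^+ m1)) 0 j)^-1 *: (delta_mx j 0 : 'cV[k]_n.+1).
have vw : u *m A ^+ m1 *m w = 1%:M.
  rewrite uv /w -scalemxAr -colE; apply/matrixP => a b.
  by move: Hj; rewrite !ord1 !mxE => Hj; rewrite mulVf // eqxx.
set K := Kmx m1 A u; set Phi := Phimx m1 A w.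
have KAe : K *m A = Jblock k m1.+1 *m K := KA u Am0.
have Kfree : row_free K := K_free Am0 vw.
have c0 : (K :&: kermx Phi)%MS = 0 := cap0 Am0 vw.
have kA : (kermx Phi *m A <= kermx Phi)%MS := kerA w Am0.
set B := row_base (kermx Phi).
have Bfree : row_free B := row_base_free _.
have BA : (B *m A <= B)%MS.
  by rewrite /B (eqmxMr _ (eq_row_base _)) eq_row_base.
set A' := B *m A *m pinvmx B.
have BAe : B *m A = A' *m B by rewrite /A' mulmxKpV.
have A'0 : A' ^+ m1.+1 = 0.
  apply/eqP; rewrite -(mulmx_free_eq0 _ Bfree) -(pow_intertw BAe) Am0 mulmx0 //.
have rK : \rank K = m1.+1 by apply/eqP.
have rsum : (\rank K + \rank (kermx Phi) <= n.+1)%N.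
  by rewrite -mxrank_disjoint_sum // rank_leq_col.
have rker : (n.+1 - m1.+1 <= \rank (kermx Phi))%N.
  by rewrite mxrank_ker leq_sub2l // rank_leq_col.
have rlt : (\rank (kermx Phi) < n.+1)%N by move: rsum; rewrite rK; clear; lia.
have [s' [ps' hs' [P' [P'free P'full P'e]]]] := IH _ rlt A' _ A'0.
have ss' : sumn s' = \rank (kermx Phi).
  by move: P'free P'full; rewrite /row_free /row_full => /eqP e1 /eqP e2; rewrite -e1 e2.
exists (m1.+1 :: s'); split.
- move: ps'; rewrite /is_partition /= => /andP[srt pos]; rewrite pos andbT.
  by case: s' hs' srt {pos P' P'free P'full P'e ss' IH} => [|x t] //= ->.
- by [].
have PBk : (P' *m B <= kermx Phi)%MS.
  by apply: submx_trans (submxMl _ _) _; rewrite /B eq_row_base.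
have : (K :&: P' *m B <= K :&: kermx Phi)%MS by apply: capmxS.
rewrite c0 submx0 => /eqP cap.
have rP : \rank (col_mx K (P' *m B)) = (m1.+1 + sumn s')%N.
  by rewrite -addsmxE mxrank_disjoint_sum // rK (mxrankMfree _ Bfree); move/eqP: P'free ->.
exists (col_mx K (P' *m B)); split.
- by rewrite /row_free rP.
- rewrite /row_full rP ss'; apply/eqP; move: rsum rker; rewrite rK; clear; lia.
- rewrite mul_col_mx KAe -mulmxA BAe mulmxA P'e /= mul_block_col.
  by rewrite !mul0mx addr0 add0r -mulmxA.
Qed.
End J.


Section R.
Variable k : fieldType.

Lemma right_inv m n (P : 'M[k]_(m, n)) : row_full P -> pinvmx P *m P = 1%:M.
Proof. by move=> f; rewrite -[LHS]mul1mx mulmxA mulmxKpV // submx_full. Qed.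

Lemma left_inv m n (P : 'M[k]_(m, n)) : row_free P -> row_full P -> P *m pinvmx P = 1%:M.
Proof.
move=> fr fu; apply/eqP; rewrite -subr_eq0 -(mulmx_free_eq0 _ fr) mulmxBl.
by rewrite mulmxKpV // mul1mx subrr.
Qed.

Lemma mxpow_comm n (A : 'M[k]_n) e : A ^+ e *m A = A *m A ^+ e.
Proof. by rewrite -[LHS]/(A ^+ e * A) -exprSr exprS. Qed.

Lemma reduce (X : triple k) N : is_Lmod X -> exists X', in_S2 X' /\
  forall Y : triple k, is_Lmod Y -> row_free (tr_h Y) -> tr_A1 Y ^+ 2 = 0 ->
    tr_A2 Y ^+ N = 0 -> homdim X Y = homdim X' Y.
Proof.
case: X => d1 d2 A1 A2 h; rewrite /is_Lmod /= => LX.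
set K := (h *m A2 ^+ 2 + A2 ^+ N)%MS.
have KA2 : (K *m A2 <= K)%MS.
  rewrite addsmxMr addsmx_sub; apply/andP; split.
    apply: submx_trans (addsmxSl _ _).
    by rewrite -mulmxA mxpow_comm mulmxA -LX -mulmxA submxMl.
  apply: submx_trans (addsmxSr _ _).
  by rewrite mxpow_comm submxMl.
set pi := col_base (cokermx K).
have piK p (x : 'M_(p, d2)) : (x <= K)%MS = (x *m pi == 0).
  have := mulmx_free_eq0 (x *m pi) (row_base_free (cokermx K)).
  by rewrite -mulmxA mulmx_base => <-; exact: submxE.
have pifull : row_full pi := col_base_full _.
set sig := pinvmx pi.
have sigpi : sig *m pi = 1%:M := right_inv pifull.
have piKer : (1%:M - pi *m sig <= K)%MS.
  by rewrite piK mulmxBl mul1mx -mulmxA sigpi mulmx1 subrr.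
set E := sig *m A2 *m pi.
have A2pi : A2 *m pi = pi *m E.
  have : ((1%:M - pi *m sig) *m A2 <= K)%MS := submx_trans (submxMr _ piKer) KA2.
  rewrite piK mulmxBl mul1mx mulmxBl subr_eq0 => /eqP ->.
  by rewrite /E !mulmxA.
have piE e : pi *m E ^+ e = A2 ^+ e *m pi by rewrite (pow_intertw (esym A2pi)).
have EN : E ^+ N = 0.
  have : (A2 ^+ N <= K)%MS := addsmxSr _ _.
  rewrite piK -piE => /eqP H.
  by rewrite -[E ^+ N]mul1mx -sigpi -mulmxA H mulmx0.
set f0 := row_base (h *m pi).
have f0free : row_free f0 := row_base_free _.
have f0le : (f0 <= h *m pi)%MS by rewrite eq_row_base.
have hpile : (h *m pi <= f0)%MS by rewrite eq_row_base.
have f0E : (f0 *m E <= f0)%MS.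
  apply: submx_trans (submxMr _ f0le) _; apply: submx_trans hpile.
  by rewrite -mulmxA -A2pi mulmxA -LX -mulmxA submxMl.
set B1 := f0 *m E *m pinvmx f0.
have f0B : f0 *m E = B1 *m f0 by rewrite mulmxKpV.
have B1sq : B1 ^+ 2 = 0.
  apply/eqP; rewrite -(mulmx_free_eq0 _ f0free) -(pow_intertw f0B).
  have : (f0 *m E ^+ 2 <= h *m pi *m E ^+ 2)%MS := submxMr _ f0le.
  have : (h *m A2 ^+ 2 <= K)%MS := addsmxSl _ _.
  rewrite piK -mulmxA -piE mulmxA => /eqP -> /submx0null ->.
  by [].
have [b' [pb hb [P2 [P2free P2full P2e]]]] := nil_jordan EN.
have [a' [pa ha [P1 [P1free P1full P1e]]]] := nil_jordan B1sq.
set R2 := pinvmx P2; set R1 := pinvmx P1.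
have R2P2 : R2 *m P2 = 1%:M := right_inv P2full.
have P2R2 : P2 *m R2 = 1%:M := left_inv P2free P2full.
have R1P1 : R1 *m P1 = 1%:M := right_inv P1full.
have P1R1 : P1 *m R1 = 1%:M := left_inv P1free P1full.
have ER2 : E *m R2 = R2 *m Nmat k b'.
  by rewrite -[E]mul1mx -R2P2 -(mulmxA R2) P2e -!mulmxA P2R2 mulmx1.
set f' := P1 *m f0 *m R2.
have LX' : Nmat k a' *m f' = f' *m Nmat k b'.
  rewrite /f' (mulmxA (Nmat k a') (P1 *m f0)) (mulmxA (Nmat k a') P1) -P1e -(mulmxA P1 B1) -f0B.
  by rewrite (mulmxA P1 f0 E) -(mulmxA (P1 *m f0) E) ER2 (mulmxA (P1 *m f0) R2).
have R2free : row_free R2 by apply/row_freeP; exists P2.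
have f'free : row_free f'.
  by rewrite /row_free /f' (mxrankMfree _ R2free) (mxrankMfree _ f0free).
exists (Triple (Nmat k a') (Nmat k b') f'); split.
  by exists a', b', f'; split => //; rewrite pa pb.
move=> Y LY fY Y1sq Y2N.
have hYpow e : tr_h Y *m tr_A2 Y ^+ e = tr_A1 Y ^+ e *m tr_h Y := pow_intertw (esym LY) e.
set Mf := f0 *m pinvmx (h *m pi).
have Mfe : Mf *m (h *m pi) = f0 by rewrite mulmxKpV.
set rho2 := pi *m R2; set rho1 := h *m pi *m pinvmx f0 *m R1.
have rho1f : rho1 *m f' = h *m rho2.
  rewrite /rho1 /f' (mulmxA _ (P1 *m f0) R2) (mulmxA _ P1 f0) -(mulmxA _ R1 P1) R1P1 mulmx1.
  by rewrite (mulmxKpV hpile) (mulmxA h pi R2).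
have A2rho : A2 *m rho2 = rho2 *m Nmat k b'.
  by rewrite /rho2 (mulmxA A2 pi R2) A2pi -(mulmxA pi E R2) ER2 mulmxA.
have p2eL (p1 : 'M_(d1, tr_d1 Y)) (p2 : 'M_(d2, tr_d2 Y)) :
    A2 *m p2 = p2 *m tr_A2 Y -> h *m p2 = p1 *m tr_h Y -> p2 = pi *m (sig *m p2).
  move=> H2 H3.
  have Kp : K *m p2 = 0.
    apply/sub_kermxP; rewrite addsmx_sub !sub_kermx; apply/andP; split; apply/eqP.
      rewrite -mulmxA -(pow_intertw (esym H2)) mulmxA H3 -mulmxA hYpow Y1sq.
      by rewrite mul0mx mulmx0.
    by rewrite -(pow_intertw (esym H2)) Y2N mulmx0.
  have : (1%:M - pi *m sig <= kermx p2)%MS.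
    by apply: submx_trans piKer _; apply/sub_kermxP.
  by rewrite sub_kermx mulmxBl mul1mx subr_eq0 -mulmxA => /eqP.
apply/eqP; rewrite eqn_leq; apply/andP; split.
- apply: (dim_le_inj (f := fun p => (P1 *m Mf *m p.1, P2 *m sig *m p.2))).
  + exact: lin_pairmul.
  + move=> p Hp; have /= [H1 H2 H3] := @HomP _ (Triple A1 A2 h) Y p Hp; case: p {Hp} H1 H2 H3 => p1 p2 /= H1 H2 H3.
    have p2e := p2eL p1 p2 H2 H3.
    have Ep : E *m (sig *m p2) = sig *m p2 *m tr_A2 Y.
      rewrite /E -(mulmxA (sig *m A2) pi) -p2e -(mulmxA sig A2 p2) H2.
      by rewrite mulmxA.
    apply: (@hom_of2 _ (Triple (Nmat k a') (Nmat k b') f') Y) => //=.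
      by rewrite -(mulmxA P2 sig p2) mulmxA -P2e -mulmxA Ep mulmxA.
    rewrite /f' -(mulmxA P2 sig p2) (mulmxA _ P2) -(mulmxA _ R2 P2) R2P2 mulmx1.
    rewrite -(mulmxA P1 f0) -Mfe -(mulmxA Mf) -(mulmxA h pi) -p2e H3.
    by rewrite !mulmxA.
  + move=> p Hp; have /= [H1 H2 H3] := @HomP _ (Triple A1 A2 h) Y p Hp; case: p {Hp} H1 H2 H3 => p1 p2 /= H1 H2 H3 /(congr1 snd) /= e2.
    have sp : sig *m p2 = 0.
      by rewrite -[sig *m p2]mul1mx -R2P2 -(mulmxA R2 P2) (mulmxA P2 sig p2) e2 mulmx0.
    have p20 : p2 = 0 by rewrite (p2eL p1 p2 H2 H3) sp mulmx0.
    have p10 : p1 = 0.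
      by apply/eqP; rewrite -(mulmx_free_eq0 _ fY) -H3 p20 mulmx0.
    by rewrite p10 p20.
- apply: (dim_le_inj (f := fun p => (rho1 *m p.1, rho2 *m p.2))).
  + exact: lin_pairmul.
  + move=> p Hp; have /= [H1 H2 H3] := @HomP _ (Triple (Nmat k a') (Nmat k b') f') Y p Hp.
    case: p {Hp} H1 H2 H3 => p1 p2 /= H1 H2 H3.
    apply: (@hom_of2 _ (Triple A1 A2 h) Y) => //=.
      by rewrite (mulmxA A2 rho2) A2rho -mulmxA H2 mulmxA.
    by rewrite (mulmxA h rho2) -rho1f -(mulmxA rho1) H3 mulmxA.
  + move=> p Hp; have /= [H1 H2 H3] := @HomP _ (Triple (Nmat k a') (Nmat k b') f') Y p Hp.
    case: p {Hp} H1 H2 H3 => p1 p2 /= H1 H2 H3 /(congr1 snd) /= e2.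
    have rp : R2 *m p2 = 0.
      by rewrite -[R2 *m p2]mul1mx -sigpi -(mulmxA sig pi) (mulmxA pi R2 p2) -/rho2 e2 mulmx0.
    have p20 : p2 = 0 by rewrite -[p2]mul1mx -P2R2 -(mulmxA P2 R2) rp mulmx0.
    have p10 : p1 = 0.
      by apply/eqP; rewrite -(mulmx_free_eq0 _ fY) -H3 p20 mulmx0.
    by rewrite p10 p20.
Qed.
End R.


Lemma S2_props (k : fieldType) (Y : triple k) : in_S2 Y -> exists N,
  [/\ is_Lmod Y, row_free (tr_h Y), tr_A1 Y ^+ 2 = 0 &
      forall N', (N <= N')%N -> tr_A2 Y ^+ N' = 0].
Proof.
case=> a [b [f [/andP[pa pb] ha -> L fr]]]; exists (sumn b); split => //=.
  apply: Nmat_pow0; apply: sub_all (part_all_head pa) => x /= H.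
  exact: leq_trans H ha.
by move=> N' le; apply: (pow_ge0 _ le); apply: Nmat_pow0; apply: all_leq_sumn.
Qed.

Lemma S2_S (k : fieldType) (X : triple k) : in_S2 X -> in_S X.
Proof. by case=> a [b [f [/andP[pa pb] _ e L fr]]]; exists a, b, f. Qed.

Lemma S_Lmod (k : fieldType) (X : triple k) : in_S X -> is_Lmod X.
Proof. by case=> a [b [f [_ _ _ L _]]]. Qed.

Unset Implicit Arguments.
Local Close Scope ring_scope.

Theorem lemma3p3 (k : fieldType) (Y Z : triple k) (a b c : seq nat) :
  in_S2 Y -> in_S2 Z -> has_ptype Y a b c -> has_ptype Z a b c ->
  (hom_le Y Z <-> (forall X, in_S2 X -> (homdim X Y <= homdim X Z)%N)) /\
  (hom_le Y Z <-> (forall X, is_Lmod X -> (homdim X Y <= homdim X Z)%N)).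
Proof.
move=> /S2_props [NY [LY fY Y1 Y2]] /S2_props [NZ [LZ fZ Z1 Z2]] _ _.
have key X : is_Lmod X -> exists X', [/\ in_S2 X', homdim X Y = homdim X' Y &
    homdim X Z = homdim X' Z].
  move=> LX; have [X' [SX' HX']] := reduce (NY + NZ) LX.
  exists X'; split => //; apply: HX' => //; [exact: Y2 (leq_addr _ _)|exact: Z2 (leq_addl _ _)].
split; split.
- by move=> H X /S2_S; exact: H.
- move=> H X /S_Lmod LX; have [X' [SX' -> ->]] := key X LX; exact: H.
- move=> H X LX; have [X' [SX' -> ->]] := key X LX; apply: H; exact: S2_S.
- by move=> H X /S_Lmod; exact: H.
Qed.
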